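(* Let $c>0$, $\Delta_1,\dots,\Delta_K\in(0,1]$ and $T\ge K$, let $\Psi_c\ge0$ be the unique solution $x\ge0$ of \[ \sum_{i=1}^K\Big(\mathbb{I}\{x\le\ln\Delta_i^{-1}\}e^{2x}+\mathbb{I}\{x>\ln\Delta_i^{-1}\}\frac{x-\ln\Delta_i^{-1}+c/2}{c\Delta_i^2/2}\Big)=T, \] and let $(x_1^*,\dots,x_K^* )$ be the optimal solution of $\mathscr{P}_c(\{\max\{\Delta_i,e^{-\Psi_c}\}\}_{i=1}^K,T)$ given by $x_i^*=\mathbb{I}\{\Psi_c\le\ln\Delta_i^{-1}\}e^{2\Psi_c}+\mathbb{I}\{\Psi_c>\ln\Delta_i^{-1}\}\frac{\Psi_c-\ln\Delta_i^{-1}+c/2}{c\Delta_i^2/2}$. Then \[ \sum_{i=1}^K\exp(-c x_i^*\Delta_i^2)\le e^{c}\,\mathscr{P}_c(\{\max\{\Delta_i,e^{-\Psi_c}\}\}_{i=1}^K,T). \]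
   Context: For $c>0$, $T\ge0$ and positive reals $D_1,\dots,D_K$, $\mathscr{P}_c(\{D_i\}_{i=1}^K,T)$ denotes the optimal value of: minimize $\sum_{i=1}^K\exp(-cx_iD_i^2)$ subject to $x_1+\dots+x_K=T$, $x_i\ge0$. *)

(* Defs.v *)
From mathcomp Require Import all_boot all_order all_algebra.
From mathcomp Require Import all_classical all_reals all_analysis.
Set Implicit Arguments. Unset Strict Implicit. Unset Printing Implicit Defensive.
Import Order.TTheory GRing.Theory Num.Theory.
Local Open Scope classical_set_scope.
Local Open Scope ring_scope.

Definition Pc_obj {R : realType} (K : nat) (c : R) (D x : 'I_K -> R) : R :=
  \sum_(i < K) expR (- (c * x i * D i ^+ 2)).

Definition Pc_feasible {R : realType} (K : nat) (T : R) : set ('I_K -> R) :=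
  [set x | (\sum_(i < K) x i = T) /\ (forall i, 0 <= x i)].

Definition Pc {R : realType} (K : nat) (c : R) (D : 'I_K -> R) (T : R) : R :=
  inf [set Pc_obj c D x | x in @Pc_feasible R K T].

Definition psi_term {R : realType} (c Di x : R) : R :=
  if x <= ln (Di^-1) then expR (2 * x)
  else (x - ln (Di^-1) + c / 2) / (c * Di ^+ 2 / 2).

(* Main.v *)
Require Import Defs.
From mathcomp Require Import all_boot all_order all_algebra.
From mathcomp Require Import all_classical all_reals all_analysis.
From mathcomp.algebra_tactics Require Import ring lra.
Import Order.TTheory GRing.Theory Num.Theory.
Local Open Scope classical_set_scope.
Local Open Scope ring_scope.

Lemma key (R : realType) (c D Psi y : R) : 0 < c -> 0 < D ->
  expR (- (c * psi_term c D Psi * D ^+ 2)) <=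
  expR c * (expR (- (c * y * Num.max D (expR (- Psi)) ^+ 2)) + c * expR (- c) * expR (- Psi) ^+ 2 * (y - psi_term c D Psi)).
Proof.
move=> hc hD; set x := psi_term c D Psi; set M := Num.max D (expR (- Psi)).
have hE : expR (- (c * x * M ^+ 2)) * (c * M ^+ 2) = c * expR (- c) * expR (- Psi) ^+ 2
     /\ expR (- (c * x * D ^+ 2)) <= expR c * expR (- (c * x * M ^+ 2)).
  rewrite /x /M /psi_term lnV ?posrE // .
  case: ifPn => hP.
  - have hDM : D <= expR (- Psi).
      by rewrite -[D]lnK ?posrE // ler_expR; lra.
    rewrite max_r //.
    have h1 : expR (2 * Psi) * expR (- Psi) ^+ 2 = 1.
      by rewrite -expRM_natl -expRD -expR0; congr expR; lra.
    rewrite -mulrA h1 mulr1; split; first by ring.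
    rewrite -expRD subrr -expR0 ler_expR oppr_le0 mulr_ge0 ?sqr_ge0 ?mulr_ge0 ?ltW ?expR_gt0 //.
  - have hDM : expR (- Psi) <= D.
      by rewrite -[D]lnK ?posrE // ler_expR; lra.
    rewrite max_l //; split => //.
    have hD2 : D ^+ 2 = expR (2 * ln D) by rewrite expRM_natl lnK.
    have -> : c * ((Psi - - ln D + c / 2) / (c * D ^+ 2 / 2)) * D ^+ 2
           = 2 * Psi + 2 * ln D + c.
      field. by rewrite ?gt_eqF ?mulr_gt0 ?expR_gt0 //; split => //; lra.
    rewrite hD2 -expRM_natl mulrA [_ * c]mulrC -!mulrA; congr (_ * _).
    rewrite -!expRD; congr expR; lra.
  by rewrite -expRD ler_expR; lra.
case: hE => hE hL.
apply: (le_trans hL); apply: ler_wpM2l; first exact: ltW (expR_gt0 _).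
set E := expR (- (c * x * M ^+ 2)).
have hE0 : 0 <= E by rewrite ltW // expR_gt0.
have := expR_ge1Dx (c * x * M ^+ 2 - c * y * M ^+ 2).
move/(ler_wpM2l hE0); rewrite /E -expRD.
have -> : - (c * x * M ^+ 2) + (c * x * M ^+ 2 - c * y * M ^+ 2) = - (c * y * M ^+ 2) by lra.
rewrite -/E -hE => h.
have -> : E = E * (1 + (c * x * M ^+ 2 - c * y * M ^+ 2)) + E * (c * M ^+ 2) * (y - x) by ring.
by rewrite lerD2r.
Qed.

Theorem lemma5 (R : realType) (K : nat) (c T Psi : R) (D : 'I_K -> R)
  (hc : 0 < c)
  (hD : forall i, 0 < D i /\ D i <= 1)
  (hT : K%:R <= T)
  (hPsi0 : 0 <= Psi)
  (hPsi : \sum_(i < K) psi_term c (D i) Psi = T)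
  (xstar : 'I_K -> R)
  (hxstar : forall i, xstar i = psi_term c (D i) Psi) :
  \sum_(i < K) expR (- (c * xstar i * D i ^+ 2))
    <= expR c * Pc c (fun i => Num.max (D i) (expR (- Psi))) T.
Proof.
set S := \sum_(i < K) _.
set lam := c * expR (- c) * expR (- Psi) ^+ 2.
have hsx : \sum_(i < K) xstar i = T.
  by rewrite -hPsi; apply: eq_bigr => i _; rewrite hxstar.
have H : forall y, Pc_feasible T y ->
    S <= expR c * Pc_obj c (fun i => Num.max (D i) (expR (- Psi))) y.
  move=> y [hy _].
  apply: (@le_trans _ _ (\sum_(i < K) expR c * (expR (- (c * y i * Num.max (D i) (expR (- Psi)) ^+ 2)) + lam * (y i - xstar i)))).
    apply: ler_sum => i _; rewrite hxstar; exact: key (hD i).1.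
  rewrite -mulr_sumr big_split /= -mulr_sumr sumrB hy hsx subrr mulr0 addr0.
  by [].
have hfeas : Pc_feasible T xstar.
  split => // i; rewrite hxstar /psi_term; case: ifPn => h.
    exact: ltW (expR_gt0 _).
  rewrite -ltNge in h.
  have [hDi _] := hD i.
  apply: divr_ge0; first lra.
  by rewrite ltW // mulr_gt0 // mulr_gt0 // exprn_gt0.
have hec : 0 < expR c := expR_gt0 c.
have -> : S = expR c * (S / expR c) by field; rewrite gt_eqF.
apply: ler_wpM2l; first exact: ltW.
apply: lb_le_inf.
  by exists (Pc_obj c (fun i => Num.max (D i) (expR (- Psi))) xstar), xstar.
move=> _ [y hy <-].
by rewrite ler_pdivrMr // mulrC H.
Qed.
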